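(* Let $G$ be a finitely generated group with an automorphism $f$ whose subgroup of fixed points is not finitely generated. Then for every integer $n\geq 1$, every $n$-configuration $c$ with $|c^{-1}(1)|\leq 1$ is realisable in $G^n$.
   Context: $G^n$ denotes the direct product of $n$ copies of $G$. Write $[n]=\{1,\dots,n\}$. An $n$-configuration is a map $c\colon \mathcal{P}([n])\setminus\{\emptyset\}\to\{0,1\}$. An $n$-configuration $c$ is realisable in a group $G$ if there exist subgroups $H_1,\dots,H_n\leq G$ such that for every non-empty subset $I\subseteq[n]$, the subgroup $\bigcap_{i\in I}H_i$ is finitely generated if and only if $c(I)=0$. *)

(* Defs.v *)
From mathcomp Require Import all_boot.
Set Implicit Arguments. Unset Strict Implicit. Unset Printing Implicit Defensive.

Record group := Group {
  carrier :> Type;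
  gmul : carrier -> carrier -> carrier;
  gone : carrier;
  ginv : carrier -> carrier;
  gmulA : forall x y z, gmul x (gmul y z) = gmul (gmul x y) z;
  gmul1x : forall x, gmul gone x = x;
  gmulx1 : forall x, gmul x gone = x;
  gmulVx : forall x, gmul (ginv x) x = gone;
  gmulxV : forall x, gmul x (ginv x) = gone
}.

Definition is_subgroup (G : group) (H : G -> Prop) : Prop :=
  H (gone G) /\ (forall x y, H x -> H y -> H (gmul x y)) /\
  (forall x, H x -> H (ginv x)).

Definition generated_by (G : group) (H : G -> Prop) (k : nat) (g : 'I_k -> G)
  : Prop :=
  (forall j, H (g j)) /\
  (forall x, H x -> forall K : G -> Prop, is_subgroup K ->
     (forall j, K (g j)) -> K x).

Definition fin_gen (G : group) (H : G -> Prop) : Prop :=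
  exists (k : nat) (g : 'I_k -> G), generated_by H g.

Definition fin_gen_group (G : group) : Prop := fin_gen (fun _ : G => True).

Definition is_automorphism (G : group) (f : G -> G) : Prop :=
  (forall x y, f (gmul x y) = gmul (f x) (f y)) /\ bijective f.

Definition fixed_points (G : group) (f : G -> G) : G -> Prop :=
  fun x => f x = x.

Section Power.
Variables (G : group) (n : nat).
Local Notation T := {ffun 'I_n -> G}.
Definition pmul (x y : T) : T := [ffun i => gmul (x i) (y i)].
Definition pone : T := [ffun _ => gone G].
Definition pinv (x : T) : T := [ffun i => ginv (x i)].
Lemma pmulA x y z : pmul x (pmul y z) = pmul (pmul x y) z.
Proof. by apply/ffunP=> i; rewrite !ffunE gmulA. Qed.
Lemma pmul1x x : pmul pone x = x.
Proof. by apply/ffunP=> i; rewrite !ffunE gmul1x. Qed.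
Lemma pmulx1 x : pmul x pone = x.
Proof. by apply/ffunP=> i; rewrite !ffunE gmulx1. Qed.
Lemma pmulVx x : pmul (pinv x) x = pone.
Proof. by apply/ffunP=> i; rewrite !ffunE gmulVx. Qed.
Lemma pmulxV x : pmul x (pinv x) = pone.
Proof. by apply/ffunP=> i; rewrite !ffunE gmulxV. Qed.
Definition power_group : group :=
  Group pmulA pmul1x pmulx1 pmulVx pmulxV.
End Power.

(* An n-configuration: a map from subsets of [n] = 'I_n to {0,1} = bool
   (true = 1); only its values on non-empty subsets are relevant. *)
Definition configuration (n : nat) := {set 'I_n} -> bool.

Definition realisable (G : group) (n : nat) (c : configuration n) : Prop :=
  exists H : 'I_n -> G -> Prop,
    (forall i, is_subgroup (H i)) /\
    (forall I : {set 'I_n}, I != set0 ->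
       (fin_gen (fun x => forall i, i \in I -> H i x) <-> c I = false)).

Definition ones_count (n : nat) (c : configuration n) : nat :=
  #|[set I : {set 'I_n} | (I != set0) && c I]|.

(* Main.v *)
Require Import Defs.
From mathcomp Require Import all_boot.
Set Implicit Arguments. Unset Strict Implicit. Unset Printing Implicit Defensive.

Section GroupLemmas.
Variable G : group.
Lemma gmul_cancl (a b c : G) : gmul a b = gmul a c -> b = c.
Proof.
move=> h; have := congr1 (gmul (ginv a)) h.
by rewrite !gmulA gmulVx !gmul1x.
Qed.
Lemma ginv1 : ginv (gone G) = gone G.
Proof. by rewrite -[ginv _]gmulx1 gmulVx. Qed.
End GroupLemmas.

Definition ghom (A B : group) (phi : A -> B) :=
  forall x y, phi (gmul x y) = gmul (phi x) (phi y).

Lemma ghom1 (A B : group) (phi : A -> B) : ghom phi -> phi (gone A) = gone B.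
Proof.
move=> h; apply: (@gmul_cancl _ (phi (gone A))).
by rewrite -h !gmulx1.
Qed.

Lemma ghomV (A B : group) (phi : A -> B) x : ghom phi -> phi (ginv x) = ginv (phi x).
Proof.
move=> h; apply: (@gmul_cancl _ (phi x)).
by rewrite -h !gmulxV (ghom1 h).
Qed.

Lemma fin_gen_ext (A : group) (P Q : A -> Prop) :
  (forall x, P x <-> Q x) -> fin_gen P -> fin_gen Q.
Proof.
move=> hPQ [k [g [h1 h2]]]; exists k, g; split.
  by move=> j; apply/hPQ.
by move=> x /hPQ; apply: h2.
Qed.

Lemma fg_image (A B : group) (phi : A -> B) (P : A -> Prop) :
  ghom phi -> fin_gen P -> fin_gen (fun b => exists2 a, P a & phi a = b).
Proof.
move=> hphi [k [g [h1 h2]]]; exists k, (fun j => phi (g j)); split.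
  by move=> j; exists (g j).
move=> _ [a Pa <-] K [K1 [KM KV]] Kg.
apply: (h2 a Pa (fun a => K (phi a))) => //.
split; first by rewrite (ghom1 hphi).
split; first by move=> x y ? ?; rewrite hphi; apply: KM.
by move=> x ?; rewrite (ghomV _ hphi); apply: KV.
Qed.

Lemma fg_trivial (A : group) (P : A -> Prop) :
  (forall x, P x -> x = gone A) -> fin_gen P.
Proof.
move=> hP; exists 0, (fun _ => gone A); split; first by case.
by move=> x /hP -> K [K1 _].
Qed.

Definition einj (G : group) (n : nat) (i : 'I_n) (a : G) : power_group G n :=
  [ffun s => if s == i then a else gone G].

Lemma einj_hom (G : group) n (i : 'I_n) : ghom (@einj G n i).
Proof.
by move=> x y; apply/ffunP=> s; rewrite /= /pmul !ffunE; case: (s == i); rewrite ?gmulx1.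
Qed.

Lemma power_fg (G : group) (n : nat) :
  fin_gen_group G -> fin_gen (fun _ : power_group G n => True).
Proof.
move=> [k [g [_ hg]]].
exists #|{: 'I_n * 'I_k}|, (fun p => einj (enum_val p).1 (g (enum_val p).2)).
split=> // x _ K [K1 [KM KV]] Kg.
have Ke : forall i a, K (einj i a).
  move=> i a; apply: (hg a I (fun a => K (einj i a))).
    split; first by rewrite (ghom1 (einj_hom i)).
    split; first by move=> u v ? ?; rewrite einj_hom; apply: KM.
    by move=> u ?; rewrite (ghomV _ (einj_hom i)); apply: KV.
  by move=> j; have := Kg (enum_rank (i, j)); rewrite enum_rankK.
have : forall s, K ([ffun i : 'I_n => if i < s then x i else gone G] : power_group G n).
  elim=> [|s IH].
    have -> : ([ffun i : 'I_n => if i < 0 then x i else gone G] : power_group G n) = gone _ by apply/ffunP=> i; rewrite !ffunE.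
    exact: K1.
  case: (ltnP s n) => hs.
    have -> : ([ffun i : 'I_n => if i < s.+1 then x i else gone G] : power_group G n)
      = gmul ([ffun i : 'I_n => if i < s then x i else gone G] : power_group G n) (einj (Ordinal hs) (x (Ordinal hs))).
      apply/ffunP=> i; rewrite /= /pmul /einj !ffunE ltnS leq_eqVlt.
      case: (eqVneq i (Ordinal hs)) => [->|ne] /=; first by rewrite eqxx ltnn gmul1x.
      have -> : (val i == s) = false by apply/negbTE; apply: contra ne => /eqP h; apply/eqP/val_inj.
      by rewrite /= gmulx1.
    by apply: KM => //.
  have -> : ([ffun i : 'I_n => if i < s.+1 then x i else gone G] : power_group G n)
      = [ffun i : 'I_n => if i < s then x i else gone G].
    by apply/ffunP=> i; rewrite !ffunE (leq_trans (ltn_ord i) hs) (leq_trans (ltn_ord i) (leqW hs)).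
  exact: IH.
move/(_ n).
have -> // : ([ffun i : 'I_n => if i < n then x i else gone G] : power_group G n) = x.
by apply/ffunP=> i; rewrite ffunE ltn_ord.
Qed.

Lemma eqpat_fg (G : group) (n : nat) (e : rel 'I_n) :
  fin_gen_group G ->
  fin_gen (fun y : power_group G n => forall a b, e a b -> y a = y b).
Proof.
move=> hG.
pose es := [rel a b | e a b || e b a].
have syms : connect_sym es.
  by apply: sym_connect_sym => a b /=; rewrite orbC.
pose psi := fun y : power_group G n => ([ffun s => y (root es s)] : power_group G n).
have hpsi : ghom psi by move=> x y; apply/ffunP=> s; rewrite /= /pmul !ffunE.
apply: (fin_gen_ext _ (fg_image hpsi (power_fg n hG))) => y; split.
  move=> [z _ <-] a b eab; rewrite /psi !ffunE; congr (z _).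
  by apply/eqP; rewrite (root_connect syms) connect1 //= eab.
move=> hy; exists y => //; apply/ffunP=> s; rewrite /psi ffunE.
have : connect es s (root es s) by apply: connect_root.
move/connectP=> [p pp ->]; elim: p s pp => //= b p IH s /andP[hsb pp].
rewrite IH //; case/orP: hsb => h; first by rewrite (hy _ _ h).
by rewrite (hy _ _ h).
Qed.

Theorem lemma2p5 (G : group) (f : G -> G) :
  fin_gen_group G -> is_automorphism f -> ~ fin_gen (fixed_points f) ->
  forall (n : nat), 1 <= n ->
  forall c : configuration n, ones_count c <= 1 ->
  realisable (power_group G n) c.
Proof.
move=> hG [fhom [g fK gK]] hFix [//|n'] _ c hc.
have f1 : f (gone G) = gone G by apply: ghom1.
have fV : forall x, f (ginv x) = ginv (f x) by move=> x; apply: ghomV.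
case: (pickP [pred I : {set 'I_n'.+1} | (I != set0) && c I]) => [I0 hI0|hnone]; last first.
  exists (fun _ _ => True); split.
    by move=> i; split=> //; split.
  move=> I IN; split=> _; last first.
    by apply: (fin_gen_ext _ (power_fg _ hG)).
  by have := hnone I; rewrite /= IN /= => ->.
case/andP: hI0 => I0N cI0.
have uniq0 : forall I, I != set0 -> c I -> I = I0.
  move=> I IN cI; move/card_le1_eqP: hc; apply; by rewrite inE ?IN ?I0N.
case/set0Pn: I0N => i0 hi0.
pose k := #|I0|.
have kn : k <= n'.+1 by have := max_card (mem I0); rewrite card_ord.
pose rank := enum_rank_in hi0.
pose C (t : nat) (y : power_group G n'.+1) : Prop :=
  if t.+1 < k then y (inord t.+1) = y (inord t) else y (inord 0) = f (y (inord t)).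
pose H (i : 'I_n'.+1) : power_group G n'.+1 -> Prop :=
  if i \in I0 then C (rank i) else (fun y => y = gone _).
exists H; split.
  move=> i; rewrite /H; case: ifP => _.
    rewrite /C; case: ((rank i).+1 < k).
      split; first by rewrite /= /pone !ffunE.
      split; first by move=> x y hx hy; rewrite /= /pmul !ffunE hx hy.
      by move=> x hx; rewrite /= /pinv !ffunE hx.
    split; first by rewrite /= /pone !ffunE f1.
    split; first by move=> x y hx hy; rewrite /= /pmul !ffunE hx hy fhom.
    by move=> x hx; rewrite /= /pinv !ffunE hx fV.
  split => //; split; first by move=> x y -> ->; apply: gmul1x.
  by move=> x ->; rewrite ginv1.
have HI0 : forall i y, i \in I0 -> H i y = C (rank i) y.
  by move=> i y hi; rewrite /H hi.
have rankP : forall t : 'I_k, exists2 i, i \in I0 & rank i = t.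
  move=> t; exists (enum_val t); first exact: enum_valP.
  exact: enum_valK_in.
have k0 : 0 < k by apply: leq_ltn_trans (ltn_ord (rank i0)).
have inordk : forall t, t < k -> val (inord t : 'I_n'.+1) = t.
  by move=> t ht; apply: inordK; apply: leq_trans kn.
move=> I IN; case: (boolP (I \subset I0)) => sub; last first.
  case/subsetPn: sub => j jI jI0; split=> _; last first.
    apply: fg_trivial => x /(_ j jI); by rewrite /H (negbTE jI0).
  apply/negbTE/negP => cI; move: jI0; by rewrite -(uniq0 I IN cI) jI.
case: (boolP (I0 \subset I)) => sub2.
  have -> : I = I0 by apply/eqP; rewrite eqEsubset sub sub2.
  rewrite cI0; split=> // hfg; exfalso; apply: hFix.
  pose pi0 := fun y : power_group G n'.+1 => y (inord 0).
  have hpi : ghom pi0 by move=> x y; rewrite /pi0 /= /pmul ffunE.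
  apply: (fin_gen_ext _ (fg_image hpi hfg)) => x; split.
    move=> [y hy <-].
    have hC : forall t : 'I_k, C t y.
      by move=> t; case: (rankP t) => i hi <-; rewrite -HI0 //; apply: hy.
    have heq : forall s, s < k -> y (inord s) = y (inord 0).
      elim=> // s IH hs; have := hC (Ordinal (ltnW hs)).
      rewrite /C /= hs => ->; by apply: IH; apply: ltnW.
    have hk1 : k.-1 < k by rewrite prednK.
    have := hC (Ordinal hk1); rewrite /C /= prednK // ltnn heq //.
  move=> hx; exists ([ffun _ => x] : power_group G n'.+1); last by rewrite /pi0 ffunE.
  move=> i hi; rewrite HI0 //.
  rewrite /C /=; case: ifP => _; rewrite !ffunE // hx.
case/subsetPn: sub2 => i1 hi1 ni1.
split=> _.
  apply/negbTE/negP => cI; move: ni1; by rewrite (uniq0 I IN cI) hi1.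
pose m := val (rank i1).
pose Phi := fun x : power_group G n'.+1 =>
  ([ffun s : 'I_n'.+1 => if s <= m then g (x s) else x s] : power_group G n'.+1).
pose Psi := fun x : power_group G n'.+1 =>
  ([ffun s : 'I_n'.+1 => if s <= m then f (x s) else x s] : power_group G n'.+1).
have hPsi : ghom Psi.
  by move=> x y; apply/ffunP=> s; rewrite /Psi /= /pmul !ffunE; case: ifP => // _; rewrite fhom.
have PhiK : forall x, Psi (Phi x) = x.
  by move=> x; apply/ffunP=> s; rewrite /Psi /Phi !ffunE; case: (s <= m); rewrite ?gK.
have PsiK : forall x, Phi (Psi x) = x.
  by move=> x; apply/ffunP=> s; rewrite /Psi /Phi !ffunE; case: (s <= m); rewrite ?fK.
have ginj : injective g by apply: (can_inj gK).
have keyC : forall (t : 'I_k) x, val t != m ->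
    (C t x <-> Phi x (inord (if t.+1 < k then t.+1 else 0)) = Phi x (inord t)).
  move=> t x tm; have mk : m < k by apply: ltn_ord.
  rewrite /C /Phi !ffunE (inordk t (ltn_ord t)).
  case: ifP => ht; rewrite inordk //.
    case: (leqP t.+1 m) => htm.
      rewrite (ltnW htm); split; [by move=> ->| by apply: ginj].
    have -> : (t <= m) = false.
      apply/negbTE; rewrite -ltnNge ltn_neqAle eq_sym tm /=; by rewrite -ltnS.
    by [].
  have -> : (t <= m) = false.
    apply/negbTE; rewrite -ltnNge ltn_neqAle eq_sym tm /=.
    by move/negbT: ht; rewrite -leqNgt => /(leq_trans mk).
  rewrite leq0n; split; first by move=> ->; rewrite fK.
  by move=> <-; rewrite gK.
pose e := [rel a b : 'I_n'.+1 | [exists i in I,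
   (a == inord (if (rank i).+1 < k then (rank i).+1 else 0)) && (b == inord (rank i))]].
have rank_ne : forall i, i \in I -> val (rank i) != m.
  move=> i hi; apply/negP => /eqP /val_inj hr; move: ni1.
  have <- : i = i1.
    by rewrite -(enum_rankK_in hi0 (subsetP sub _ hi)) -(enum_rankK_in hi0 hi1); congr enum_val.
  by rewrite hi.
apply: (fin_gen_ext _ (fg_image hPsi (eqpat_fg e hG))) => x; split.
  move=> [y hy <-] i hi; rewrite HI0; last exact: (subsetP sub).
  apply/keyC; first exact: rank_ne.
  rewrite PsiK; apply: hy; apply/existsP; exists i; by rewrite hi !eqxx.
move=> hx; exists (Phi x) => //.
move=> a b /existsP [i /and3P [hi /eqP -> /eqP ->]].
apply/keyC; first exact: rank_ne.
by rewrite -HI0; [apply: hx | exact: (subsetP sub)].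
Qed.
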